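(* Let $n\ge1$ and let $\mathcal{S}\subseteq\mathbb{R}_{++}$ be a finite set. A function $g:\overline{\mathcal{S}}^n\to[0,1]$ belongs to $\mathcal{G}_n(\mathcal{S})$ if and only if there exists $G\in\mathcal{G}_n(\mathbb{R}_{++})$ such that $g$ is the restriction of $G$ to $\overline{\mathcal{S}}^n$.
   Context: For $D\subseteq\mathbb{R}$ put $\overline{D}=D\cup\{0\}\cup\{\infty\}$ (so $\overline{\mathbb{R}_{++}}=[0,\infty]$). For $\mathbf{x}\le\mathbf{y}$ (coordinatewise) let $V_{xy}=\{x_1,y_1\}\times\cdots\times\{x_n,y_n\}$, and for $\mathbf{b}\in V_{xy}$ let $\mathrm{sgn}(\mathbf{b})=1$ if $b_i=x_i$ for an even number of indices $i$ and $-1$ otherwise. A function $G$ is $n$-increasing on $\overline{D}^n$ if $\sum_{\mathbf{b}\in V_{xy}}\mathrm{sgn}(\mathbf{b})G(\mathbf{b})\ge0$ for all $\mathbf{x}\le\mathbf{y}$ in $\overline{D}^n$. For $\mathcal{S}\subseteq\mathbb{R}_{++}$, $\mathcal{G}_n(\mathcal{S})$ is the set of functions $G:\overline{\mathcal{S}}^n\to[0,1]$ that are right continuous on $\overline{\mathcal{S}}^n$, $n$-increasing on $\overline{\mathcal{S}}^n$, satisfy $G(\mathbf{z})=0$ whenever at least one $z_i=0$, and satisfy $G(\infty,\dots,\infty)=1$. *)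

(* Defs.v *)
From HB Require Import structures.
From mathcomp Require Import all_boot all_order all_algebra.
From mathcomp Require Import all_classical all_reals.
From mathcomp Require Import ereal.
Set Implicit Arguments. Unset Strict Implicit. Unset Printing Implicit Defensive.
Import Order.TTheory GRing.Theory Num.Theory.
Local Open Scope classical_set_scope.
Local Open Scope ring_scope.

Definition Dbar (R : realType) (D : set R) : set (\bar R) :=
  [set x | x = 0%E \/ x = +oo%E \/ exists2 r, D r & x = r%:E].

Definition in_Dbarn (R : realType) (n : nat) (D : set R) (z : 'I_n -> \bar R) :=
  forall i, Dbar D (z i).

Definition vle (R : realType) (n : nat) (x y : 'I_n -> \bar R) :=
  forall i, (x i <= y i)%E.

Definition vertex (R : realType) (n : nat) (x y : 'I_n -> \bar R)
  (b : {ffun 'I_n -> bool}) : 'I_n -> \bar R :=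
  fun i => if b i then y i else x i.

Definition vsgn (R : realType) {n : nat} (b : {ffun 'I_n -> bool}) : R :=
  (-1) ^+ #|[pred i | ~~ b i]|.

Definition n_increasing (R : realType) (n : nat) (D : set R)
  (G : ('I_n -> \bar R) -> R) :=
  forall x y, in_Dbarn D x -> in_Dbarn D y -> vle x y ->
    0 <= \sum_(b : {ffun 'I_n -> bool}) vsgn R b * G (vertex x y b).

(* right continuity on \overline{D}^n (w.r.t. the order topology of [0,∞]):
   for y in the domain with y >= x and y_i <= x_i + delta for all i
   (when x_i = +oo this forces y_i = +oo), |G y - G x| < eps. *)
Definition right_continuous_on (R : realType) (n : nat) (D : set R)
  (G : ('I_n -> \bar R) -> R) :=
  forall x, in_Dbarn D x -> forall eps : R, 0 < eps ->
    exists2 delta : R, 0 < delta &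
      forall y, in_Dbarn D y -> vle x y ->
        (forall i, (y i <= x i + delta%:E)%E) -> `|G y - G x| < eps.

(* \mathcal{G}_n(S): G is only considered on \overline{S}^n *)
Definition in_Gn (R : realType) (n : nat) (S : set R)
  (G : ('I_n -> \bar R) -> R) :=
  [/\ forall z, in_Dbarn S z -> 0 <= G z <= 1,
      right_continuous_on S G,
      n_increasing S G,
      forall z, in_Dbarn S z -> (exists i, z i = 0%E) -> G z = 0
    & G (fun _ => +oo%E) = 1].

Definition Rpp (R : realType) : set R := [set r | 0 < r].
Arguments Rpp R : clear implicits.

(* Main.v *)
Require Import Defs.
From mathcomp Require Import all_boot all_order all_algebra.
From mathcomp Require Import all_classical all_reals.
From mathcomp Require Import ereal lra.
Import Order.TTheory GRing.Theory Num.Theory.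
Local Open Scope classical_set_scope.
Local Open Scope ring_scope.

Module Helpers.
Set Implicit Arguments. Unset Strict Implicit.
Definition DB (R : realType) (B : seq R) (w : \bar R) :=
  w = 0%E \/ w = +oo%E \/ exists2 r, r \in B & w = r%:E.

Lemma floor_ex (R : realType) (B : seq R) (z : \bar R) : (0 <= z)%E ->
  exists f, [/\ DB B f, (f <= z)%E & forall w, DB B w -> (w <= z)%E -> (w <= f)%E].
Proof.
move=> z0; elim: B => [|a B [f [Df fz Hf]]].
  have [->|zoo] := eqVneq z +oo%E.
    exists +oo%E; split.
    - by right; left.
    - by [].
    - by move=> w _; rewrite leey.
  exists 0%E; split => //; first by left.
  move=> w [->//|[->|[r]]]; last by [].
  by rewrite leye_eq (negbTE zoo).
have DBc : forall w, DB B w -> DB (a :: B) w.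
  move=> w [->|[->|[r rB ->]]]; [by left|by right;left|].
  by right; right; exists r => //; rewrite inE rB orbT.
have [az|za] := boolP (a%:E <= z)%E.
  have [fa|af] := boolP (f <= a%:E)%E.
    exists a%:E; split => //.
      by right; right; exists a => //; rewrite inE eqxx.
    move=> w [->|[->|[r]]].
    - move=> _; apply: le_trans fa; apply: Hf => //; by left.
    - move=> wz; apply: le_trans fa; apply: Hf => //; by right; left.
    - rewrite inE => /orP[/eqP->|rB] -> // rz.
      apply: le_trans fa; apply: Hf => //; by right; right; exists r.
  exists f; split => //; first exact: DBc.
  have af' : (a%:E <= f)%E by rewrite leNgt; apply: contra af => /ltW.
  move=> w [->|[->|[r]]].
  - by move=> wz; apply: Hf => //; left.
  - by move=> wz; apply: Hf => //; right; left.
  - by rewrite inE => /orP[/eqP->|rB] -> // rz; apply: Hf => //; right; right; exists r.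
exists f; split => //; first exact: DBc.
move=> w [->|[->|[r]]].
- by move=> wz; apply: Hf => //; left.
- by move=> wz; apply: Hf => //; right; left.
- rewrite inE => /orP[/eqP->|rB] -> rz; first by rewrite rz in za.
  by apply: Hf => //; right; right; exists r.
Qed.

Lemma ge_min_l (R : realType) (a b : R) : Num.min a b <= a.
Proof. by rewrite ge_min lexx. Qed.
Lemma ge_min_r (R : realType) (a b : R) : Num.min a b <= b.
Proof. by rewrite ge_min lexx orbT. Qed.

Lemma gap_ex (R : realType) (B : seq R) (r : R) :
  exists2 d : R, 0 < d & forall s, s \in B -> r < s -> r + d < s.
Proof.
elim: B => [|a B [d d0 Hd]]; first by exists 1 => //.
have [ra|ar] := ltP r a.
  exists (Num.min d ((a - r) / 2)).
    by rewrite lt_min d0 /= divr_gt0 // subr_gt0.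
  move=> s; rewrite inE => /orP[/eqP->|sB] rs.
    rewrite -ltrBrDl; apply: le_lt_trans (ge_min_r _ _) _.
    rewrite ltr_pdivrMr // ltr_pMr ?subr_gt0 //; lra.
  apply: le_lt_trans (Hd s sB rs); rewrite lerD2l; exact: ge_min_l.
exists d => // s; rewrite inE => /orP[/eqP->|sB] rs; last exact: Hd.
by move: (lt_le_trans rs ar); rewrite ltxx.
Qed.

Lemma min_ex (T : eqType) (R : realType) (P : R -> T -> Prop)
  (Pmono : forall d d' i, 0 < d' -> d' <= d -> P d i -> P d' i)
  (s : seq T) : (forall i, exists2 d, 0 < d & P d i) ->
  exists2 d, 0 < d & forall i, i \in s -> P d i.
Proof.
move=> H; elim: s => [|a s [d d0 Hd]]; first by exists 1.
have [e e0 He] := H a.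
exists (Num.min d e); first by rewrite lt_min d0 e0.
move=> i; rewrite inE => /orP[/eqP->|iS].
  by apply: Pmono He; rewrite ?lt_min ?d0 ?e0 // ge_min_r.
by apply: Pmono (Hd i iS); rewrite ?lt_min ?d0 ?e0 // ge_min_l.
Qed.
Lemma DbarRpp_ge0 (R : realType) (w : \bar R) : Dbar (Rpp R) w -> (0 <= w)%E.
Proof. by move=> [->|[->|[r r0 ->]]] //; rewrite lee_fin ltW. Qed.

Lemma Dbar_sub (R : realType) (S : set R) w : S `<=` Rpp R -> Dbar S w -> Dbar (Rpp R) w.
Proof. by move=> hS [->|[->|[r /hS r0 ->]]]; [left|right;left|right;right;exists r]. Qed.

Lemma DB_Dbar (R : realType) (B : seq R) w : DB B w <-> Dbar [set` B] w.
Proof. by []. Qed.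

Lemma vertex_comp (R : realType) n (f : \bar R -> \bar R) (x y : 'I_n -> \bar R) b :
  (fun i => f (vertex x y b i)) = vertex (fun i => f (x i)) (fun i => f (y i)) b.
Proof. by apply: funext => i; rewrite /vertex; case: (b i). Qed.

Lemma forward (R : realType) (n : nat) (S : set R)
  (hS : S `<=` Rpp R) (hfin : finite_set S)
  (g : ('I_n -> \bar R) -> R) :
  in_Gn S g ->
  exists G : ('I_n -> \bar R) -> R,
    in_Gn (Rpp R) G /\ (forall z, in_Dbarn S z -> g z = G z).
Proof.
move=> [g01 grc ginc g0 g1].
have [B SB] := (finite_seqP S).1 hfin.
have Hex : forall z, exists f, (0 <= z)%E -> [/\ DB B f, (f <= z)%E &
   forall w, DB B w -> (w <= z)%E -> (w <= f)%E].
  move=> z; have [z0|z0] := boolP (0 <= z)%E.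
    by have [f Hf] := floor_ex B z0; exists f.
  by exists 0%E.
have [fl Hfl] := choice Hex.
have FL1 z : (0 <= z)%E -> Dbar S (fl z) by move=> /Hfl[+ _ _]; rewrite SB.
have FL2 z : (0 <= z)%E -> (fl z <= z)%E by move=> /Hfl[].
have FL3 z w : (0 <= z)%E -> Dbar S w -> (w <= z)%E -> (w <= fl z)%E.
  by move=> /Hfl[_ _ H]; rewrite SB; apply: H.
have FLid z : Dbar S z -> fl z = z.
  move=> Dz; have z0 : (0 <= z)%E by apply: DbarRpp_ge0; apply: Dbar_sub Dz.
  by apply/eqP; rewrite eq_le FL2 //= FL3.
have FLmono z z' : (0 <= z)%E -> (z <= z')%E -> (fl z <= fl z')%E.
  move=> z0 zz; apply: FL3; [exact: le_trans zz|exact: FL1|exact: le_trans (FL2 _ z0) zz].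
have Dfl z : in_Dbarn (Rpp R) z -> in_Dbarn S (fun i => fl (z i)).
  by move=> Hz i; apply: FL1; apply: DbarRpp_ge0.
exists (fun z => g (fun i => fl (z i))); split; last first.
  by move=> z Hz; congr g; apply: funext => i; rewrite FLid.
split.
- by move=> z Hz; apply: g01; apply: Dfl.
- move=> x Hx eps eps0.
  pose P d i := forall yi, (0 <= yi)%E -> (x i <= yi)%E -> (yi <= x i + d%:E)%E ->
     fl yi = fl (x i).
  have Pmono d d' i : 0 < d' -> d' <= d -> P d i -> P d' i.
    move=> d'0 dd Pd yi yi0 xy yd; apply: Pd => //; apply: le_trans yd _.
    by rewrite leeD2l // lee_fin.
  have Pex i : exists2 d, 0 < d & P d i.
    have x0 := DbarRpp_ge0 (Hx i).
    move: x0; rewrite /P; case: (x i) => [r| |] //= r0.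
    + have [d d0 Hd] := gap_ex B r.
      exists d => // yi yi0 xy yd; apply/eqP; rewrite eq_le; apply/andP; split; last first.
        exact: FLmono.
      apply: FL3 => //; first exact: FL1.
      have := FL1 _ yi0; move=> [->|[E|[s Ss E]]] //.
        by have := le_trans (FL2 _ yi0) yd; rewrite E leye_eq.
      rewrite E; have := le_trans (FL2 _ yi0) yd; rewrite E !lee_fin => sd.
      rewrite leNgt; apply/negP => rs.
      rewrite SB in Ss; have := Hd s Ss rs; rewrite ltNge sd.
      by [].
    + exists 1 => // yi yi0 xy yd.
      by move: xy; rewrite leye_eq => /eqP ->.
  have [d d0 Hd] := min_ex Pmono (enum 'I_n) Pex.
  exists d => // y Hy xy yd.
  have -> : (fun i => fl (y i)) = (fun i => fl (x i)).
    apply: funext => i; apply: (Hd i); rewrite ?mem_enum //.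
    exact: DbarRpp_ge0.
  by rewrite subrr normr0.
- move=> x y Hx Hy xy.
  under eq_bigr => b _ do rewrite vertex_comp.
  apply: ginc; [exact: Dfl|exact: Dfl|].
  by move=> i; apply: FLmono; [exact: DbarRpp_ge0|exact: xy].
- move=> z Hz [i zi]; apply: g0; first exact: Dfl.
  exists i; rewrite zi; apply/eqP; rewrite eq_le FL2 //= FL3 //; by left.
- rewrite /= -g1; congr g; apply: funext => i; apply: FLid; by right; left.
Qed.
Lemma backward (R : realType) (n : nat) (S : set R)
  (hS : S `<=` Rpp R) (g : ('I_n -> \bar R) -> R) :
  (exists G : ('I_n -> \bar R) -> R,
    in_Gn (Rpp R) G /\ (forall z, in_Dbarn S z -> g z = G z)) -> in_Gn S g.
Proof.
move=> [G [[G01 Grc Ginc G0 G1] gG]].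
have DS (z : 'I_n -> \bar R) : in_Dbarn S z -> in_Dbarn (Rpp R) z by move=> Hz i; apply: Dbar_sub (Hz i).
have Doo : in_Dbarn S (fun _ : 'I_n => +oo%E) by move=> i; right; left.
split.
- by move=> z Hz; rewrite gG //; apply: G01; apply: DS.
- move=> x Hx eps eps0; have [d d0 Hd] := Grc x (DS _ Hx) eps eps0.
  exists d => // y Hy xy yd; rewrite !gG //; apply: Hd => //; exact: DS.
- move=> x y Hx Hy xy.
  have -> : \sum_(b : {ffun 'I_n -> bool}) vsgn R b * g (vertex x y b) =
            \sum_(b : {ffun 'I_n -> bool}) vsgn R b * G (vertex x y b).
    apply: eq_bigr => b _; rewrite gG // => i; rewrite /vertex; case: (b i); [exact: Hy|exact: Hx].
  by apply: Ginc => //; apply: DS.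
- by move=> z Hz Hi; rewrite gG // G0 //; apply: DS.
- by rewrite gG.
Qed.
End Helpers.

Theorem lemma1 (R : realType) (n : nat) (S : set R)
  (hn : (0 < n)%N) (hS : S `<=` Rpp R) (hfin : finite_set S)
  (g : ('I_n -> \bar R) -> R) :
  in_Gn S g <->
  exists G : ('I_n -> \bar R) -> R,
    in_Gn (Rpp R) G /\ (forall z, in_Dbarn S z -> g z = G z).
Proof.
split; [exact: Helpers.forward|exact: Helpers.backward].
Qed.
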